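(* Let $\{p^\circ_{(R,\alpha)}\}_{(R,\alpha)}$ be a replacement rule satisfying the Fixation Axiom and representing neutral drift. Then $\hat\Delta_{\mathrm{sel}}(\mathbf{x})=0$ for every state $\mathbf{x}\in\{0,1\}^G$. Furthermore, if $(\tilde v_g)_{g\in G}$ is any collection of real weights such that $$\tilde\Delta_{\mathrm{sel}}(\mathbf{x}):=\sum_{g,h\in G}x_g\big(e^\circ_{gh}\tilde v_h-e^\circ_{hg}\tilde v_g\big)=0\quad\text{for every state }\mathbf{x},$$ then $(\tilde v_g)_{g\in G}$ is a constant multiple of $(v_g)_{g\in G}$.
   Context: Setting. $G$ is a finite nonempty set of genetic sites, $n=|G|$; a state is $\mathbf{x}\in\{0,1\}^G$. A replacement event is $(R,\alpha)$ with $R\subseteq G$, $\alpha:R\to G$; a replacement rule gives for each state a probability distribution $\{p_{(R,\alpha)}(\mathbf{x})\}$ over events. The rule represents neutral drift if $p_{(R,\alpha)}(\mathbf{x})=p^\circ_{(R,\alpha)}$ is independent of $\mathbf{x}$ for every event. Fixation Axiom: there exist $g\in G$, $m\ge1$, events $(R_k,\alpha_k)_{k=1}^m$ with $p_{(R_k,\alpha_k)}>0$, $g\in R_k$ for some $k$, and $\tilde\alpha_1\circ\cdots\circ\tilde\alpha_m(h)=g$ for all $h\in G$, where $\tilde\alpha_k$ equals $\alpha_k$ on $R_k$ and the identity elsewhere. Quantities: $e^\circ_{gh}=\sum_{(R,\alpha):h\in R,\alpha(h)=g}p^\circ_{(R,\alpha)}$, $d^\circ_g=\sum_he^\circ_{hg}$.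 Reproductive values $(v_g)$: the unique solution of $d^\circ_gv_g=\sum_he^\circ_{gh}v_h$ for all $g\in G$ and $\sum_gv_g=n$. $\hat b_g=\sum_he^\circ_{gh}v_h$, $\hat d_g=v_gd^\circ_g$, $\hat\Delta_{\mathrm{sel}}(\mathbf{x})=\sum_gx_g(\hat b_g-\hat d_g)$. *)

(* Defs.v *)
From HB Require Import structures.
From mathcomp Require Import all_boot all_order all_algebra.
Set Implicit Arguments. Unset Strict Implicit. Unset Printing Implicit Defensive.
Import Order.TTheory GRing.Theory Num.Theory.
Local Open Scope ring_scope.

Definition state (G : finType) := {ffun G -> bool}.

(* A replacement event (R, alpha) with R ⊆ G, alpha : R -> G, encoded as
   ev h = Some (alpha h) if h ∈ R, and ev h = None if h ∉ R.
   This encoding is a bijection between pairs (R, alpha) and {ffun G -> option G}. *)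
Definition event (G : finType) := {ffun G -> option G}.

Definition ev_dom (G : finType) (E : event G) : {set G} := [set h | E h != None].

Definition ev_ext (G : finType) (E : event G) (h : G) : G := odflt h (E h).

Definition is_replacement_rule (R : realFieldType) (G : finType)
    (p : state G -> event G -> R) : Prop :=
  (forall x E, 0 <= p x E) /\ (forall x, \sum_(E : event G) p x E = 1).

Definition neutral_drift (R : realFieldType) (G : finType)
    (p : state G -> event G -> R) (p0 : event G -> R) : Prop :=
  forall x E, p x E = p0 E.

Definition fixation_axiom (R : realFieldType) (G : finType)
    (p0 : event G -> R) : Prop :=
  exists (g : G) (s : seq (event G)),
    [/\ (1 <= size s)%N,
        (forall E, E \in s -> 0 < p0 E),
        (exists2 E, E \in s & g \in ev_dom E) &
        (forall h : G, foldr (fun E y => ev_ext E y) h s = g)].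

Definition edge (R : realFieldType) (G : finType) (p0 : event G -> R)
    (g h : G) : R :=
  \sum_(E : event G | E h == Some g) p0 E.

Definition death (R : realFieldType) (G : finType) (p0 : event G -> R)
    (g : G) : R :=
  \sum_(h : G) edge p0 h g.

Definition is_reproductive_values (R : realFieldType) (G : finType)
    (p0 : event G -> R) (v : G -> R) : Prop :=
  (forall g, death p0 g * v g = \sum_(h : G) edge p0 g h * v h) /\
  \sum_(g : G) v g = #|G|%:R.

Definition b_hat (R : realFieldType) (G : finType) (p0 : event G -> R)
    (v : G -> R) (g : G) : R := \sum_(h : G) edge p0 g h * v h.

Definition d_hat (R : realFieldType) (G : finType) (p0 : event G -> R)
    (v : G -> R) (g : G) : R := v g * death p0 g.

Definition Delta_sel_hat (R : realFieldType) (G : finType) (p0 : event G -> R)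
    (v : G -> R) (x : state G) : R :=
  \sum_(g : G) (x g)%:R * (b_hat p0 v g - d_hat p0 v g).

Definition Delta_sel_tilde (R : realFieldType) (G : finType) (p0 : event G -> R)
    (vt : G -> R) (x : state G) : R :=
  \sum_(g : G) \sum_(h : G)
    (x g)%:R * (edge p0 g h * vt h - edge p0 h g * vt g).

(* Main.v *)
Require Import Defs.
From HB Require Import structures.
From mathcomp Require Import all_boot all_order all_algebra.
Import Order.TTheory GRing.Theory Num.Theory.
Local Open Scope ring_scope.

Lemma foldr_closed (G : finType) (P : G -> Prop) (Q : event G -> Prop)
  (s : seq (event G)) h :
  (forall E, E \in s -> Q E) ->
  (forall E y, Q E -> P y -> P (ev_ext E y)) ->
  P h -> P (foldr (fun E y => ev_ext E y) h s).
Proof.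
elim: s => [|E s IH] //= HQ Hcl Ph.
apply: (Hcl); first exact: (HQ E (mem_head _ _)).
apply: IH Hcl Ph => E' HE'; have := HQ E'; rewrite in_cons HE' orbT; exact.
Qed.

Lemma edge_ge0 (R : realFieldType) (G : finType) (p0 : event G -> R) g h :
  (forall E, 0 <= p0 E) -> 0 <= edge p0 g h.
Proof. by move=> H; apply: sumr_ge0. Qed.

Lemma edge_ge (R : realFieldType) (G : finType) (p0 : event G -> R) (E : event G) (z y : G) :
  (forall E, 0 <= p0 E) -> E y = Some z -> p0 E <= edge p0 z y.
Proof.
move=> H Ey; rewrite /edge (bigD1 E) /=; last by rewrite Ey.
by rewrite lerDl; apply: sumr_ge0.
Qed.

(* right-kernel functions are constant *)
Lemma max_principle (R : realFieldType) (G : finType) (p0 : event G -> R)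
  (f : G -> R) g0 (s : seq (event G)) :
  (forall E, 0 <= p0 E) ->
  (forall E, E \in s -> 0 < p0 E) ->
  (forall h : G, foldr (fun E y => ev_ext E y) h s = g0) ->
  (forall g, death p0 g * f g = \sum_h edge p0 h g * f h) ->
  forall h1, (forall y, f y <= f h1) -> f g0 = f h1.
Proof.
move=> p0ge0 Hs Hfix Hf h1 Hmax.
rewrite -(Hfix h1).
apply: (@foldr_closed G (fun y => f y = f h1) (fun E => 0 < p0 E)) => //.
move=> E y HE Hy; rewrite /ev_ext.
case Ey: (E y) => [z|] //=.
have subrge : forall h, 0 <= f h1 - f h by move=> h; rewrite subr_ge0.
have Hsum : \sum_h edge p0 h y * (f h1 - f h) = 0.
  rewrite -Hy; under eq_bigr do rewrite mulrBr.
  by rewrite sumrB -mulr_suml; have := Hf y; rewrite /death => ->; rewrite subrr.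
have Hz := psumr_eq0P (P := xpredT) (fun (h : G) _ => mulr_ge0 (@edge_ge0 R G p0 h y p0ge0)
   (subrge h)) Hsum (i := z) isT.
have epos : 0 < edge p0 z y by apply: lt_le_trans (@edge_ge R G p0 E z y p0ge0 Ey).
move/eqP: Hz; rewrite mulf_eq0 (gt_eqF epos) /= subr_eq0 => /eqP.
by move=> <-.
Qed.

Lemma reidx (G : finType) (R : realFieldType) (F : G -> R) :
  \sum_(i < #|G|) F (enum_val i) = \sum_g F g.
Proof. by rewrite -big_enum_val. Qed.

Theorem theorem6 (R : realFieldType) (G : finType)
    (p : state G -> event G -> R) (p0 : event G -> R) (v : G -> R) :
  (0 < #|G|)%N ->
  is_replacement_rule p ->
  neutral_drift p p0 ->
  fixation_axiom p0 ->
  is_reproductive_values p0 v ->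
  (forall x : state G, Delta_sel_hat p0 v x = 0) /\
  (forall vt : G -> R,
     (forall x : state G, Delta_sel_tilde p0 vt x = 0) ->
     exists c : R, forall g : G, vt g = c * v g).
Proof.
move=> n_gt0 [pge0 psum1] Hneu [g0 [s [_ Hspos _ Hfix]]] [Hv Hvsum].
have p0ge0 : forall E, 0 <= p0 E.
  by move=> E; rewrite -(Hneu [ffun _ => false] E); exact: pge0.
split.
  move=> x; rewrite /Delta_sel_hat big1 // => g _.
  by rewrite /b_hat /d_hat -Hv [v g * _]mulrC subrr mulr0.
move=> vt Hvt.
have Hvt' : forall g, death p0 g * vt g = \sum_h edge p0 g h * vt h.
  move=> g; have := Hvt [ffun y => y == g].
  rewrite /Delta_sel_tilde (bigD1 g) //= [X in _ + X]big1 => [|g' ng']; last first.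
    by rewrite big1 // => h _; rewrite ffunE (negbTE ng') mul0r.
  rewrite ffunE eqxx addr0; under eq_bigr do rewrite mul1r.
  rewrite sumrB -mulr_suml => /eqP; rewrite subr_eq0 => /eqP ->.
  by [].
pose ev (i : 'I_#|G|) : G := enum_val i.
pose A : 'M[R]_(#|G|) :=
  \matrix_(i, j) ((i == j)%:R * death p0 (ev i) - edge p0 (ev j) (ev i)).
have left_ker : forall w : G -> R,
    (forall g, death p0 g * w g = \sum_h edge p0 g h * w h) ->
    (\row_i w (ev i) <= kermx A)%MS.
  move=> w Hw; rewrite sub_kermx; apply/eqP/rowP => j; rewrite !mxE.
  under eq_bigr do rewrite !mxE mulrBr.
  rewrite sumrB (bigD1 j) //= eqxx mul1r big1 ?addr0 => [|i /negbTE ->];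
    last by rewrite mul0r mulr0.
  rewrite (@reidx G R (fun h => w h * edge p0 (ev j) h)) mulrC Hw.
  by under eq_bigr do rewrite mulrC; rewrite subrr.
have right_ker : forall u : 'rV[R]_(#|G|), u *m A^T = 0 -> (u <= (const_mx 1 : 'rV[R]_(#|G|)))%MS.
  move=> u Hu.
  pose f (g : G) := u 0 (enum_rank g).
  have fev : forall i, f (ev i) = u 0 i by move=> i; rewrite /f /ev enum_valK.
  have Hf : forall g, death p0 g * f g = \sum_h edge p0 h g * f h.
    move=> g; have [i ->] : exists i : 'I_#|G|, g = ev i.
      by exists (enum_rank g); rewrite /ev enum_rankK.
    have := congr1 (fun M : 'rV[R]_(#|G|) => M 0 i) Hu; rewrite !mxE.
    under eq_bigr do rewrite !mxE mulrBr.
    rewrite sumrB (bigD1 i) //= eqxx mul1r big1 ?addr0 => [|j /negbTE]; last first.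
      by rewrite eq_sym => ->; rewrite mul0r mulr0.
    move/eqP; rewrite subr_eq0 => /eqP.
    rewrite -(@reidx G R (fun h => edge p0 h (ev i) * f h)) fev mulrC => ->.
    by apply: eq_bigr => j _; rewrite fev mulrC.
  have Hfn : forall g, death p0 g * (- f g) = \sum_h edge p0 h g * (- f h).
    move=> g; rewrite mulrN Hf -sumrN; apply: eq_bigr => h _; by rewrite mulrN.
  case: (@arg_maxP _ R G g0 xpredT f isT) => h1 _ Hmax1.
  case: (@arg_maxP _ R G g0 xpredT (fun g => - f g) isT) => h2 _ Hmax2.
  have e1 := @max_principle R G p0 _ g0 s p0ge0 Hspos Hfix Hf h1 (fun y => Hmax1 y isT).
  have e2 := @max_principle R G p0 _ g0 s p0ge0 Hspos Hfix Hfn h2 (fun y => Hmax2 y isT).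
  have fc : forall y, f y = f g0.
    move=> y; have a : f y <= f g0 by rewrite e1; exact: Hmax1.
    have b : - f y <= - f g0 by rewrite e2; exact: Hmax2.
    by apply/eqP; rewrite eq_le a /=; rewrite lerN2 in b.
  have -> : u = f g0 *: const_mx 1.
    by apply/rowP => j; rewrite !mxE -fev fc mulr1.
  exact: scalemx_sub.
have rk : (\rank (kermx A) <= 1)%N.
  rewrite mxrank_ker -mxrank_tr -mxrank_ker.
  apply: leq_trans (rank_leq_row (const_mx 1 : 'rV[R]_(#|G|))).
  apply: mxrankS; apply/row_subP => i; apply: right_ker.
  have /eqP HK : (kermx A^T *m A^T == 0) by rewrite -sub_kermx submx_refl.
  by rewrite -row_mul HK row0.
have vin := left_ker v Hv.
have vtin := left_ker vt Hvt'.
have vnz : (\row_i v (ev i)) != 0.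
  apply/negP => /eqP H.
  have : \sum_g v g = 0.
    by rewrite -reidx; apply: big1 => i _; have := congr1 (fun M : 'rV[R]_(#|G|) => M 0 i) H; rewrite !mxE.
  by rewrite Hvsum => /eqP; rewrite pnatr_eq0 => /eqP H0; rewrite H0 in n_gt0.
have := mxrank_leqif_eq vin; rewrite rank_rV vnz => Hle.
have /eqP Heq : (\rank (kermx A) == 1)%N.
  by rewrite eqn_leq rk; have := Hle.1.
have /andP [_ Hsub] : (\row_i v (ev i) == kermx A)%MS.
  by rewrite -Hle.2 Heq.
have /submxP [D HD] := submx_trans vtin Hsub.
exists (D 0 0) => g; have [i ->] : exists i : 'I_#|G|, g = ev i.
  by exists (enum_rank g); rewrite /ev enum_rankK.
have := congr1 (fun M : 'rV[R]_(#|G|) => M 0 i) HD; rewrite !mxE big_ord1 mxE.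
by [].
Qed.
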